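(* Let $\mathcal{A}=(Q,\delta,s)$ be an NFA satisfying the standing assumptions below, and run the Ordered Partition Refinement algorithm described below on $\mathcal{A}$. At the beginning of every iteration of its while loop, every part of the ordered partition $\mathcal{P}$ is forward-stable with respect to every part of $\mathcal{X}$.
   Context: $\Sigma=\{a_1<\dots<a_k\}$ is a finite totally ordered alphabet. NFA $\mathcal{A}=(Q,\delta,s)$, $\delta:Q\times\Sigma\to2^Q$, $\delta_a(u)=\delta(u,a)$, $\delta_a(T)=\bigcup_{u\in T}\delta_a(u)$. Standing assumptions: $s$ has no incoming transitions, every state is reachable from $s$, every $v\neq s$ has incoming transitions labeled by exactly one letter $\lambda(v)$, and every letter labels some transition. A set $S\subseteq Q$ is forward-stable with respect to $T\subseteq Q$ if for every $a\in\Sigma$, $S\subseteq\delta_a(T)$ or $S\cap\delta_a(T)=\emptyset$. Algorithm (Ordered Partition Refinement): let $Q_\epsilon=\{s\}$ and $Q_a=\{v:\lambda(v)=a\}$. Initialize the ordered partitions $\mathcal{P}:=\langle Q_\epsilon,Q_{a_1},\dots,Q_{a_k}\rangle$ and $\mathcal{X}:=\langle Q\rangle$. While $\mathcal{X}\neq\mathcal{P}$: let $S$ be the first part of $\mathcal{X}$ that is a union of at least two parts of $\mathcal{P}$; let $B$ be the smaller (in cardinality) of the first and the last part of $\mathcal{P}$ contained in $S$; replace $S$ in $\mathcal{X}$ by $B,S\setminus B$ if $B$ was the first such part, otherwise by $S\setminus B,B$. Then for each part $D$ of $\mathcal{P}$ (those present before this splitting step), with $a=\lambda(D)$ (the common label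 of its states; for the part $\{s\}$ take $D_1=\emptyset$): $D_1:=D\cap\delta_a(B)$, $D_2:=D\setminus D_1$, $D_{11}:=D_1\cap\delta_a(S\setminus B)$, $D_{12}:=D_1\setminus D_{11}$; replace $D$ in $\mathcal{P}$ by the nonempty sets among $D_{12},D_{11},D_2$ in this order if $B$ was the first part, and among $D_2,D_{11},D_{12}$ in this order otherwise. Return $\mathcal{P}$. *)

(* Defs.v *)
From mathcomp Require Import all_boot.
Set Implicit Arguments. Unset Strict Implicit. Unset Printing Implicit Defensive.

Section NFA.
Variables (Q : finType) (k : nat).
(* Alphabet Sigma = 'I_k, ordered by the natural order a_1 < ... < a_k. *)
Variable delta : Q -> 'I_k -> {set Q}.

Definition delta_set (T : {set Q}) (a : 'I_k) : {set Q} :=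
  \bigcup_(u in T) delta u a.

Definition trans_rel : rel Q := fun u v => [exists a, v \in delta u a].

(* lambda(v): the (unique, under the standing assumptions) label of the
   incoming transitions of v; None if v has no incoming transition (v = s). *)
Definition lam (v : Q) : option 'I_k :=
  [pick a | [exists u, v \in delta u a]].

Definition forward_stable (S T : {set Q}) : Prop :=
  forall a : 'I_k, S \subset delta_set T a \/ S :&: delta_set T a = set0.

Definition in_img (T : {set Q}) (v : Q) : bool :=
  if lam v is Some a then v \in delta_set T a else false.

Definition parts_in (P : seq {set Q}) (S : {set Q}) : seq {set Q} :=
  filter (fun D : {set Q} => D \subset S) P.

(* State of the algorithm: (P, X), both ordered partitions (sequences of sets). *)
Definition opr_init (s : Q) : seq {set Q} * seq {set Q} :=
  ([:: [set s] & [seq [set v | lam v == Some a] | a <- enum 'I_k]],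
   [:: [set: Q]]).

Definition opr_step (st : seq {set Q} * seq {set Q}) : seq {set Q} * seq {set Q} :=
  let P := st.1 in let X := st.2 in
  let i := find (fun S => 1 < size (parts_in P S)) X in
  if i < size X then
    let S := nth set0 X i in
    let ps := parts_in P S in
    let F := head set0 ps in
    let L := last set0 ps in
    let bfirst := #|F| <= #|L| in
    let B := if bfirst then F else L in
    let X' := take i X ++ (if bfirst then [:: B; S :\: B] else [:: S :\: B; B])
              ++ drop i.+1 X in
    let refine (D : {set Q}) :=
      let D1 := [set v in D | in_img B v] in
      let D2 := D :\: D1 in
      let D11 := [set v in D1 | in_img (S :\: B) v] in
      let D12 := D1 :\: D11 in
      filter (fun E : {set Q} => E != set0) (if bfirst then [:: D12; D11; D2] else [:: D2; D11; D12]) in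
    (flatten (map refine P), X')
  else st.

(* State at the beginning of the (n+1)-th loop iteration (or the final state
   if the loop has terminated earlier). *)
Definition opr_state (s : Q) (n : nat) : seq {set Q} * seq {set Q} :=
  iter n (fun st => if st.2 == st.1 then st else opr_step st) (opr_init s).

End NFA.

(* Main.v *)
Require Import Defs.
From mathcomp Require Import all_boot.

Section Aux.
Variables (Q : finType) (k : nat) (delta : Q -> 'I_k -> {set Q}).

Definition inv (st : seq {set Q} * seq {set Q}) : Prop :=
  forall D, D \in st.1 -> forall u v, u \in D -> v \in D ->
    lam delta u = lam delta v /\
    (forall T, T \in st.2 -> in_img delta T u = in_img delta T v).

Lemma sdiff (S B : {set Q}) v : ~~ in_img delta B v ->
  in_img delta (S :\: B) v = in_img delta S v.
Proof.
rewrite /in_img; case: (lam delta v) => // a nB.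
apply/bigcupP/bigcupP => [[u]|[u hu hv]].
  by rewrite inE => /andP[_ huS] hv; exists u.
exists u => //; rewrite inE hu andbT; apply/negP => huB; apply: (negP nB).
by apply/bigcupP; exists u.
Qed.

Lemma step_inv st : inv st -> inv (opr_step delta st).
Proof.
case: st => P X H; rewrite /opr_step /=.
case: ifP => hi; last by [].
set i := find _ X.
set S := nth set0 X i.
set ps := parts_in P S.
set bf := (#|head set0 ps| <= #|last set0 ps|).
set B := if bf then _ else _.
have hS : S \in X by apply: mem_nth.
move=> D /flattenP [E /mapP [D0 hD0 ->]] hD u v hu hv.
have key : [/\ u \in D0, v \in D0, in_img delta B u = in_img delta B v &
     in_img delta (S :\: B) u = in_img delta (S :\: B) v].
  move: hD; rewrite mem_filter => /andP[_ hD'].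
  have E3 : D = [set v in [set v in D0 | in_img delta B v] | in_img delta (S :\: B) v]
         \/ D = [set v in D0 | in_img delta B v] :\: [set v in [set v in D0 | in_img delta B v] | in_img delta (S :\: B) v]
         \/ D = D0 :\: [set v in D0 | in_img delta B v].
    move: hD'; case: (bf) => /=; rewrite !inE => /orP[/eqP->|/orP[/eqP->|/eqP->]]; tauto.
  case: E3 => [->|[->|->]] in hu hv.
  - move: hu hv; rewrite !inE; case E3: (in_img delta B u); case E4: (in_img delta B v); case E5: (in_img delta (S :\: B) u); case E6: (in_img delta (S :\: B) v); case E1: (u \in D0); case E2: (v \in D0) => //=; by move=> _ _; split.
  - move: hu hv; rewrite !inE; case E3: (in_img delta B u); case E4: (in_img delta B v); case E5: (in_img delta (S :\: B) u); case E6: (in_img delta (S :\: B) v); case E1: (u \in D0); case E2: (v \in D0) => //=; by move=> _ _; split.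
  - move: hu hv; rewrite !inE => /andP[hu1 hu] /andP[hv1 hv].
    move: hu1 hv1; rewrite hu hv /= => hu1 hv1.
    rewrite (negPf hu1) (negPf hv1) !sdiff //.
    by have [_ ->] := H D0 hD0 u v hu hv.
case: key => hu0 hv0 hB hSB.
have [hl hT] := H D0 hD0 u v hu0 hv0.
split => // T; rewrite !mem_cat => /or3P[/mem_take|hT'|/mem_drop]; try exact: hT.
by case: (bf) hT' => /=; rewrite !inE => /orP[/eqP->|/eqP->].
Qed.

Lemma init_inv s : (forall (u : Q) (a : 'I_k), s \notin delta u a) ->
  inv (opr_init delta s).
Proof.
move=> Hs D /=; rewrite inE => /orP[/eqP->|/mapP[a _ ->]] u v.
  by rewrite !inE => /eqP-> /eqP->.
rewrite !inE => /eqP hu /eqP hv; split; first by rewrite hu hv.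
move=> T; rewrite inE => /eqP->; rewrite /in_img hu hv.
have img w : lam delta w = Some a -> w \in delta_set delta [set: Q] a.
  rewrite /lam; case: pickP => // b /existsP[x hx] [<-].
  by apply/bigcupP; exists x; rewrite ?inE.
by rewrite !img.
Qed.

Lemma state_inv s n : (forall (u : Q) (a : 'I_k), s \notin delta u a) ->
  inv (opr_state delta s n).
Proof.
move=> Hs; elim: n => [|n IH] /=; first exact: init_inv.
by case: ifP => _ //; apply: step_inv.
Qed.

End Aux.

Theorem lemma10 (Q : finType) (k : nat) (delta : Q -> 'I_k -> {set Q}) (s : Q)
  (Hs : forall (u : Q) (a : 'I_k), s \notin delta u a)
  (Hreach : forall v : Q, connect (trans_rel delta) s v)
  (Hlab : forall v : Q, v != s -> exists! a : 'I_k, exists u : Q, v \in delta u a)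
  (Hletter : forall a : 'I_k, exists u v : Q, v \in delta u a)
  (n : nat) :
  let st := opr_state delta s n in
  st.2 != st.1 ->
  forall D T : {set Q}, D \in st.1 -> T \in st.2 -> forward_stable delta D T.
Proof.
move=> st _ D T hD hT b.
have lamb v : v \in delta_set delta T b -> lam delta v = Some b.
  case/bigcupP => u _ hv.
  have vs : v != s by apply/eqP => e; move: (Hs u b); rewrite -e hv.
  have [x [_ ux]] := Hlab v vs.
  rewrite /lam; case: pickP => [a /existsP[w hw]|/(_ b)]; last first.
    by move=> /existsP; case; exists u.
  by rewrite -(ux a); [rewrite -(ux b) //; exists u | exists w].
case: (boolP [exists v, (v \in D) && (v \in delta_set delta T b)]).
  case/existsP => v /andP[hvD hv]; left; apply/subsetP => w hw.
  have [hl hi] := @state_inv Q k delta s n Hs D hD w v hw hvD.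
  have := hi T hT; rewrite /in_img hl (lamb v hv) hv => /=.
  by [].
move=> hn; right; apply/setP => w; rewrite !inE; apply/negP => /andP[h1 h2].
by apply: (negP hn); apply/existsP; exists w; rewrite h1.
Qed.
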